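(* Let $\mathcal C$ be a category of $\mathcal A$-coloured noncrossing partitions, let $w$ be a word on $\mathcal A$, and let $p,q\in\mathcal C(w,w)$ be projective partitions with no through-blocks. Then $p$ and $q$ are equivalent in $\mathcal C$.
   Context: Colour sets and partitions: a colour set is a set $\mathcal A$ with an involution $a\mapsto a^{-1}$. For words $w,w'$ on $\mathcal A$, an element of $P^{\mathcal A}(w,w')$ is a partition of $|w|+|w'|$ points drawn as an upper row coloured (left to right) by $w$ and a lower row coloured by $w'$; its subsets are blocks. It is noncrossing if there are no four points $k_1<k_2<k_3<k_4$ (ordering: upper row left to right, then lower row right to left) with $k_1,k_3$ in one block and $k_2,k_4$ in a different block. Category operations: tensor product, composition $qp$ (stack $q$ below $p$, identify middle rows, erase middle points and closed loops), adjoint $p^*$ (reflection), rotation (moving an extreme point to the other row and replacing its colour $a$ by $a^{-1}$). A category of noncrossing partitions is a family $\mathcal C(w,w')\subset NC^{\mathcal A}(w,w')$ stable under these operations and containing $\pi(a,a)$ for all $a$. A through-block is a block containing both upper and lower points. A partition $p\in P(w,w)$ is projective if $pp=p=p^*$. Two projective partitions $p,q$ are equivalent in $\mathcal C$ if there is $r\in\mathcal C$ with $r^*r=p$ and $rr^*=q$. *)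

(* Defs.v *)
From HB Require Import structures.
From mathcomp Require Import all_boot.
Set Implicit Arguments. Unset Strict Implicit. Unset Printing Implicit Defensive.

(* Point numbering for an element of P(w,w'): index i < size w is the i-th
   upper point (left to right); index size w + j is the j-th lower point
   (left to right). *)
Definition part (A : Type) (w w' : seq A) := {set {set 'I_(size w + size w')}}.

Definition nrel N (P : {set {set 'I_N}}) (i j : nat) : bool :=
  match (insub i : option 'I_N), (insub j : option 'I_N) with
  | Some x, Some y => y \in pblock P x
  | _, _ => false
  end.

Definition of_rel N (r : nat -> nat -> bool) : {set {set 'I_N}} :=
  [set [set y : 'I_N | r (val x) (val y)] | x : 'I_N].

Section Ops.
Variable A : Type.

Definition tens (w1 w1' w2 w2' : seq A) (p : part w1 w1') (q : part w2 w2')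
  : part (w1 ++ w2) (w1' ++ w2') :=
  let k1 := size w1 in let k2 := size w2 in let l1 := size w1' in
  let src x := if x < k1 then (true, x)
               else if x < k1 + k2 then (false, x - k1)
               else if x < k1 + k2 + l1 then (true, k1 + (x - (k1 + k2)))
               else (false, k2 + (x - (k1 + k2 + l1))) in
  of_rel _ (fun x y => ((src x).1 == (src y).1) &&
     (if (src x).1 then nrel p (src x).2 (src y).2
      else nrel q (src x).2 (src y).2)).

Definition adj (w w' : seq A) (p : part w w') : part w' w :=
  let k := size w in let l := size w' in
  let f x := if x < l then k + x else x - l in
  of_rel _ (fun x y => nrel p (f x) (f y)).

(* composition  qp : stack q below p, identify the middle rows, erase the
   middle points and the closed loops *)
Definition partcomp (w w' w'' : seq A) (p : part w w') (q : part w' w'')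
  : part w w'' :=
  let k := size w in let l := size w' in let m := size w'' in
  let e := fun x y : 'I_(k + l + m) =>
     [&& x < k + l, y < k + l & nrel p x y] ||
     [&& k <= x, k <= y & nrel q (x - k) (y - k)] in
  let emb x := if x < k then x else x + l in
  of_rel _ (fun x y =>
    match (insub (emb x) : option 'I_(k + l + m)),
          (insub (emb y) : option 'I_(k + l + m)) with
    | Some a, Some b => connect e a b
    | _, _ => false
    end).

Definition rotUL (inv : A -> A) (a : A) (w w' : seq A) (p : part (a :: w) w')
  : part w (inv a :: w') :=
  let k := size w in
  let f x := if x < k then x.+1 else if x == k then 0 else x in
  of_rel _ (fun x y => nrel p (f x) (f y)).

Definition rotUR (inv : A -> A) (a : A) (w w' : seq A) (p : part (rcons w a) w')
  : part w (rcons w' (inv a)) :=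
  let k := size w in let l := size w' in
  let f x := if x < k then x else if x < k + l then x.+1 else k in
  of_rel _ (fun x y => nrel p (f x) (f y)).

Definition rotLL (inv : A -> A) (a : A) (w w' : seq A) (p : part w (a :: w'))
  : part (inv a :: w) w' :=
  let k := size w in
  let f x := if x == 0 then k else if x <= k then x.-1 else x in
  of_rel _ (fun x y => nrel p (f x) (f y)).

Definition rotLR (inv : A -> A) (a : A) (w w' : seq A) (p : part w (rcons w' a))
  : part (rcons w (inv a)) w' :=
  let k := size w in let l := size w' in
  let f x := if x < k then x else if x == k then k + l else x.-1 in
  of_rel _ (fun x y => nrel p (f x) (f y)).

Definition idpart (a : A) : part [:: a] [:: a] := [set [set: 'I_2]].

(* cyclic position: upper row left to right, then lower row right to left *)
Definition pos (k l x : nat) : nat := if x < k then x else (k + k + l).-1 - x.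

Definition noncrossing (w w' : seq A) (p : part w w') : Prop :=
  partition p [set: 'I_(size w + size w')] /\
  forall x1 x2 x3 x4 : 'I_(size w + size w'),
    [&& pos (size w) (size w') x1 < pos (size w) (size w') x2,
        pos (size w) (size w') x2 < pos (size w) (size w') x3 &
        pos (size w) (size w') x3 < pos (size w) (size w') x4] ->
    pblock p x1 = pblock p x3 -> pblock p x2 = pblock p x4 ->
    pblock p x1 = pblock p x2.

Record is_category (inv : A -> A) (C : forall w w' : seq A, part w w' -> Prop)
  : Prop := {
  cat_nc : forall w w' (p : part w w'), C w w' p -> noncrossing p;
  cat_tens : forall w1 w1' w2 w2' (p : part w1 w1') (q : part w2 w2'),
      C w1 w1' p -> C w2 w2' q -> C (w1 ++ w2) (w1' ++ w2') (tens p q);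
  cat_comp : forall w w' w'' (p : part w w') (q : part w' w''),
      C w w' p -> C w' w'' q -> C w w'' (partcomp p q);
  cat_adj : forall w w' (p : part w w'), C w w' p -> C w' w (adj p);
  cat_rotUL : forall a w w' (p : part (a :: w) w'),
      C (a :: w) w' p -> C w (inv a :: w') (rotUL inv p);
  cat_rotUR : forall a w w' (p : part (rcons w a) w'),
      C (rcons w a) w' p -> C w (rcons w' (inv a)) (rotUR inv p);
  cat_rotLL : forall a w w' (p : part w (a :: w')),
      C w (a :: w') p -> C (inv a :: w) w' (rotLL inv p);
  cat_rotLR : forall a w w' (p : part w (rcons w' a)),
      C w (rcons w' a) p -> C (rcons w (inv a)) w' (rotLR inv p);
  cat_id : forall a, C [:: a] [:: a] (idpart a)
}.

Definition has_through_block (w w' : seq A) (p : part w w') : Prop :=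
  exists2 B, B \in p &
    (exists x : 'I_(size w + size w'), (x \in B) && (x < size w)) /\
    (exists y : 'I_(size w + size w'), (y \in B) && (size w <= y)).

Definition projective (w : seq A) (p : part w w) : Prop :=
  partcomp p p = p /\ adj p = p.

Definition equivalent (C : forall w w' : seq A, part w w' -> Prop)
  (w v : seq A) (p : part w w) (q : part v v) : Prop :=
  exists r : part w v, C w v r /\ partcomp r (adj r) = p /\ partcomp (adj r) r = q.

End Ops.

(* Main.v *)
Require Import Defs.
From HB Require Import structures.
From mathcomp Require Import all_boot zify.
Set Implicit Arguments. Unset Strict Implicit. Unset Printing Implicit Defensive.

Definition eqv N (R : nat -> nat -> bool) :=
  [/\ (forall i, i < N -> R i i),
      (forall i j, i < N -> j < N -> R i j -> R j i) &
      (forall i j l, i < N -> j < N -> l < N -> R i j -> R j l -> R i l)].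

Lemma nrel_bnd N (P : {set {set 'I_N}}) i j : nrel P i j -> (i < N) && (j < N).
Proof. by rewrite /nrel; case: insubP => [x -> _|//]; case: insubP => [y -> _|//]. Qed.

Lemma nrel_val N (P : {set {set 'I_N}}) (x y : 'I_N) : nrel P x y = (y \in pblock P x).
Proof. by rewrite /nrel !valK. Qed.

Lemma part_eqv N (P : {set {set 'I_N}}) : partition P [set: 'I_N] -> eqv N (nrel P).
Proof.
case/and3P=> /eqP cov tI _.
have mp x : x \in pblock P x by rewrite mem_pblock cov inE.
split.
- move=> i Hi; rewrite /nrel; case: insubP => [x _ _|]; last by rewrite Hi.
  exact: mp.
- move=> i j Hi Hj; rewrite /nrel; case: insubP => [x _ _|//]; case: insubP => [y _ _|//].
  by move=> yx; rewrite (same_pblock tI yx) mp.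
- move=> i j l _ _ _; rewrite /nrel; case: insubP => [x _ _|//]; case: insubP => [y _ _|//].
  case: insubP => [z _ _|//] yx zy.
  by rewrite -(same_pblock tI yx).
Qed.

Lemma of_rel_nrel N (R R' : nat -> nat -> bool) : eqv N R' ->
  (forall x y, x < N -> y < N -> R x y = R' x y) ->
  forall i j, nrel (of_rel N R) i j = [&& i < N, j < N & R' i j].
Proof.
case=> rf sy tr eR i j; rewrite /nrel.
case: insubP => [x Hi vx|]; last by move/negbTE->.
case: insubP => [y Hj vy|]; last by move/negbTE->; rewrite andbF.
rewrite Hi Hj -vx -vy /=.
have -> : pblock (of_rel N R) x = [set z : 'I_N | R' x z].
  rewrite /pblock; case: pickP => [B /andP[HB xB] | none] /=.
  - case/imsetP: HB => z _ Bz; move: xB; rewrite Bz inE eR ?ltn_ord // => zx.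
    apply/setP=> t; rewrite !inE eR ?ltn_ord //; apply/idP/idP => H.
    + exact: tr _ _ _ (ltn_ord _) (ltn_ord _) (ltn_ord _) (sy _ _ (ltn_ord _) (ltn_ord _) zx) H.
    + exact: tr _ _ _ (ltn_ord _) (ltn_ord _) (ltn_ord _) zx H.
  - have := none [set z : 'I_N | R x z]; rewrite /= inE eR ?ltn_ord // rf // andbT.
    by rewrite /of_rel imset_f.
by rewrite inE.
Qed.

Lemma of_rel_part N (R : nat -> nat -> bool) (P : {set {set 'I_N}}) :
  partition P [set: 'I_N] -> (forall x y : 'I_N, R x y = nrel P x y) -> of_rel N R = P.
Proof.
case/and3P=> /eqP cov tI P0 eR.
have -> : of_rel N R = [set pblock P x | x : 'I_N].
  rewrite /of_rel; apply: eq_imset => x; apply/setP => y; by rewrite inE eR nrel_val.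
apply/setP => B; apply/imsetP/idP => [[x _ ->]|PB].
  by apply: pblock_mem; rewrite cov inE.
have /set0Pn[x xB] : B != set0 by apply: contraNneq P0 => <-.
by exists x => //; rewrite (def_pblock tI PB xB).
Qed.

Definition glue k (EP EQ : nat -> nat -> bool) x y :=
  ((x < k) == (y < k)) && (if x < k then EP x y else EQ x y).

Lemma conn_S (T : finType) (e S : rel T) : (forall a b, e a b -> S a b) ->
  (forall a, S a a) -> (forall a b c, S a b -> S b c -> S a c) ->
  forall a b, connect e a b -> S a b.
Proof.
move=> eS Sr St a b /connectP[s]; elim: s a => [|c s IH] a /=; first by move=> _ ->.
by case/andP=> eac pth Hb; apply: St (eS _ _ eac) (IH _ pth Hb).
Qed.

Lemma eq_of_rel N (R R' : nat -> nat -> bool) :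
  (forall x y : 'I_N, R x y = R' x y) -> of_rel N R = of_rel N R'.
Proof. by move=> eR; apply: eq_imset => x; apply/setP => y; rewrite !inE eR. Qed.

Lemma comp_glue (A : Type) (w : seq A) (P Q : part w w) :
  eqv (size w + size w) (nrel P) -> eqv (size w + size w) (nrel Q) ->
  (forall i j, nrel P i j -> (i < size w) = (j < size w)) ->
  (forall i j, nrel Q i j -> (i < size w) = (j < size w)) ->
  partcomp P Q = of_rel (size w + size w) (glue (size w) (nrel P) (nrel Q)).
Proof.
move=> [rP sP tP] [rQ sQ tQ] nP nQ.
rewrite /partcomp; apply: eq_of_rel => x y /=.
move: (ltn_ord x) (ltn_ord y) => xk yk; set k := size w in rP sP tP rQ sQ tQ nP nQ xk yk *.
set e := fun a b : 'I_(k + k + k) => _ || _.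
pose S := fun a b : 'I_(k + k + k) =>
  if a < k then (b < k) && nrel P a b
  else if a < k + k then (k <= b) && (b < k + k)
  else (k + k <= b) && nrel Q (a - k) (b - k).
have bP i j : nrel P i j -> (i < k + k) && (j < k + k) by apply: nrel_bnd.
have bQ i j : nrel Q i j -> (i < k + k) && (j < k + k) by apply: nrel_bnd.
have eS a b : e a b -> S a b.
  rewrite /e /S; case/orP => /and3P[h1 h2 h3].
  - have := nP _ _ h3; have := bP _ _ h3.
    case: ifP => ha; first by move=> _ <-; rewrite h3.
    by move=> _ /esym/negbT; rewrite -leqNgt => hb; rewrite h1 hb h2.
  - have := nQ _ _ h3; have := bQ _ _ h3; case/andP => b1 b2 hh.
    have -> : (a < k) = false by lia.
    case: ifP => ha.
      have : a - k < k by lia.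
      by rewrite hh => hb; apply/andP; split; lia.
    have : (a - k < k) = false by lia.
    by rewrite hh => hb; rewrite h3 andbT; lia.
have Sr a : S a a.
  rewrite /S; case: ifP => ha; first by rewrite ha rP //; lia.
  case: ifP => hb; first by apply/andP; split; lia.
  by rewrite rQ ?andbT; move: (ltn_ord a); lia.
have St a b c : S a b -> S b c -> S a c.
  rewrite /S; case: ifP => ha.
    case/andP => hb h1; rewrite hb => /andP[hc h2]; rewrite hc.
    apply: tP h1 h2; lia.
  case: ifP => ha2.
    case/andP => h1 h2; have -> : (b < k) = false by lia.
    by rewrite h2.
  case/andP => h1 h2; have -> : (b < k) = false by lia.
  have -> : (b < k + k) = false by lia.
  case/andP => h3 h4; rewrite h3 /=.
  have := bP; move: (bQ _ _ h2) (bQ _ _ h4) => /andP[_ _] /andP[_ _] _.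
  by apply: tQ h2 h4; move: (ltn_ord a) (ltn_ord b) (ltn_ord c); lia.
case: insubP => [a _ va|]; last by case: ifP => _ /negP H; exfalso; apply: H; lia.
case: insubP => [b _ vb|]; last by case: ifP => _ /negP H; exfalso; apply: H; lia.
apply/idP/idP.
- move/(conn_S eS Sr St); rewrite /S va vb /glue.
  case: (ltnP x k) => hx.
    rewrite hx; case: ifP => hy; rewrite ?hy /=; first by [].
    by case/andP=> H; exfalso; lia.
  have -> : (x + k < k) = false by lia.
  have -> : (x + k < k + k) = false by lia.
  case: ifP => hy; case/andP => h1 h2; first by exfalso; lia.
  by move: h2; rewrite !addnK.
- rewrite /glue => /andP[/eqP hxy h]; apply: connect1; rewrite /e.
  move: va vb h; case: ifP => hx; rewrite -hxy hx => va vb h.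
    by rewrite va vb h; apply/orP; left; apply/and3P; split; lia.
  by rewrite va vb !addnK h orbC; apply/orP; left; apply/and3P; split; lia.
Qed.

Definition fl k i := if i < k then k + i else i - k.

Lemma adj_nrel (A : Type) (w : seq A) (P : part w w) :
  eqv (size w + size w) (nrel P) -> forall i j, nrel (adj P) i j =
  [&& i < size w + size w, j < size w + size w & nrel P (fl (size w) i) (fl (size w) j)].
Proof.
case=> rP sP tP; apply: of_rel_nrel => // ; split.
- by move=> i Hi; apply: rP; rewrite /fl; case: ifP => h; lia.
- by move=> i j Hi Hj; apply: sP; rewrite /fl; case: ifP => h; lia.
- by move=> i j l Hi Hj Hl; apply: tP; rewrite /fl; case: ifP => h; lia.
Qed.

Lemma eqv_ext N (R R' : nat -> nat -> bool) :
  (forall i j, i < N -> j < N -> R i j = R' i j) -> eqv N R' -> eqv N R.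
Proof.
move=> e [r s t]; split.
- by move=> i Hi; rewrite e ?r.
- by move=> i j Hi Hj; rewrite !e //; apply: s.
- by move=> i j l Hi Hj Hl; rewrite !e //; apply: t.
Qed.

Lemma glue_eqv k (EP EQ : nat -> nat -> bool) :
  eqv (k + k) EP -> eqv (k + k) EQ ->
  (forall i j, EP i j -> (i < k) = (j < k)) ->
  (forall i j, EQ i j -> (i < k) = (j < k)) ->
  eqv (k + k) (glue k EP EQ).
Proof.
move=> [rP sP tP] [rQ sQ tQ] nP nQ; rewrite /glue; split.
- by move=> i Hi; rewrite eqxx /=; case: ifP => _; [apply: rP | apply: rQ].
- move=> i j Hi Hj /andP[/eqP e]; rewrite e eqxx -e; case: ifP => _; [apply: sP | apply: sQ] => //.
- move=> i j l Hi Hj Hl /andP[/eqP e1] h1 /andP[/eqP e2] h2.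
  rewrite e1 e2 eqxx /=; move: h1 h2; rewrite e1 e2; case: ifP => _; [apply: tP | apply: tQ] => //.
Qed.

Lemma nt_nrel (A : Type) (w : seq A) (P : part w w) :
  partition P [set: 'I_(size w + size w)] -> ~ has_through_block P ->
  forall i j, nrel P i j -> (i < size w) = (j < size w).
Proof.
case/and3P=> /eqP cov tI _ nt i j.
rewrite /nrel; case: insubP => [x _ vx|//]; case: insubP => [y _ vy|//] yx.
rewrite /= in vx vy; rewrite -vx -vy; apply/idP/idP => H; apply: contra_notT nt => /negbTE H2;
  exists (pblock P x); try (by apply: pblock_mem; rewrite cov inE).
- split; [exists x; rewrite H mem_pblock cov inE //| exists y; rewrite yx /=; lia].
- split; [exists y; rewrite H yx //| exists x; rewrite mem_pblock cov inE /=; lia].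
Qed.

Lemma fl_lt k i : i < k + k -> fl k i < k + k.
Proof. by rewrite /fl; case: ifP => h; lia. Qed.

Theorem lemma3p3 (A : Type) (inv : A -> A) (Hinv : involutive inv)
  (C : forall w w' : seq A, part w w' -> Prop) (HC : is_category inv C)
  (w : seq A) (p q : part w w) (Cp : C w w p) (Cq : C w w q)
  (Pp : projective p) (Pq : projective q)
  (Np : ~ has_through_block p) (Nq : ~ has_through_block q) :
  equivalent C p q.
Proof.
have partp : partition p [set: 'I_(size w + size w)] by case: (cat_nc HC Cp).
have partq : partition q [set: 'I_(size w + size w)] by case: (cat_nc HC Cq).
have ep := part_eqv partp; have eq := part_eqv partq.
have np := nt_nrel partp Np; have nq := nt_nrel partq Nq.
have adjp i j : i < size w + size w -> j < size w + size w ->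
    nrel p i j = nrel p (fl (size w) i) (fl (size w) j).
  by move=> Hi Hj; rewrite -{1}Pp.2 adj_nrel // Hi Hj.
have adjq i j : i < size w + size w -> j < size w + size w ->
    nrel q i j = nrel q (fl (size w) i) (fl (size w) j).
  by move=> Hi Hj; rewrite -{1}Pq.2 adj_nrel // Hi Hj.
exists (partcomp p q); split; first exact: (cat_comp HC Cp Cq).
have eg := glue_eqv ep eq np nq.
have hr i j : nrel (partcomp p q) i j =
    [&& i < size w + size w, j < size w + size w & glue (size w) (nrel p) (nrel q) i j].
  by rewrite (comp_glue ep eq np nq); apply: of_rel_nrel.
set r := partcomp p q in hr *.
have er : eqv (size w + size w) (nrel r).
  by apply: eqv_ext eg => i j Hi Hj; rewrite hr Hi Hj.
have nr i j : nrel r i j -> (i < size w) = (j < size w).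
  by rewrite hr /glue => /and3P[_ _ /andP[/eqP]].
have har i j : nrel (adj r) i j = [&& i < size w + size w, j < size w + size w &
   glue (size w) (nrel p) (nrel q) (fl (size w) i) (fl (size w) j)].
  rewrite adj_nrel // hr; case: (ltnP i (size w + size w)) => Hi //=.
  case: (ltnP j (size w + size w)) => Hj //=.
  by rewrite !fl_lt.
have ear : eqv (size w + size w) (nrel (adj r)).
  case: eg => rg sg tg; apply: eqv_ext (_ : eqv _ (fun i j => glue (size w) (nrel p) (nrel q) (fl (size w) i) (fl (size w) j))).
    by move=> i j Hi Hj; rewrite har Hi Hj.
  split.
  - by move=> i Hi; apply: rg; rewrite fl_lt.
  - by move=> i j Hi Hj; apply: sg; rewrite fl_lt.
  - by move=> i j l Hi Hj Hl; apply: tg; rewrite fl_lt.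
have nar i j : nrel (adj r) i j -> (i < size w) = (j < size w).
  rewrite har /glue /fl => /and3P[Hi Hj /andP[/eqP]].
  by case: ifP => h1; case: ifP => h2; lia.
split.
- rewrite (comp_glue er ear nr nar); apply: of_rel_part => // x y.
  move: (ltn_ord x) (ltn_ord y) => Hx Hy.
  rewrite /glue hr har Hx Hy /= /glue.
  case: (ltnP x (size w)) => hx; case: (ltnP y (size w)) => hy /=.
  + by [].
  + by apply/esym/negbTE/negP => /np; lia.
  + by apply/esym/negbTE/negP => /np; lia.
  + have fx : fl (size w) x = x - size w by rewrite /fl ltnNge hx.
    have fy : fl (size w) y = y - size w by rewrite /fl ltnNge hy.
    rewrite fx fy; have -> : (x - size w < size w) = true by lia.
    have -> : (y - size w < size w) = true by lia.
    rewrite /= adjp; try lia.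
    have -> : fl (size w) (x - size w) = x by rewrite /fl; case: ifP => h; lia.
    by have -> : fl (size w) (y - size w) = y by rewrite /fl; case: ifP => h; lia.
- rewrite (comp_glue ear er nar nr); apply: of_rel_part => // x y.
  move: (ltn_ord x) (ltn_ord y) => Hx Hy.
  rewrite /glue hr har Hx Hy /= /glue.
  case: (ltnP x (size w)) => hx; case: (ltnP y (size w)) => hy /=.
  + have fx : fl (size w) x = size w + x by rewrite /fl hx.
    have fy : fl (size w) y = size w + y by rewrite /fl hy.
    rewrite fx fy.
    have -> : (size w + x < size w) = false by lia.
    have -> : (size w + y < size w) = false by lia.
    rewrite /= (adjq (size w + x)); try lia.
    have -> : fl (size w) (size w + x) = x by rewrite /fl; case: ifP => h; lia.
    by have -> : fl (size w) (size w + y) = y by rewrite /fl; case: ifP => h; lia.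
  + by apply/esym/negbTE/negP => /nq; lia.
  + by apply/esym/negbTE/negP => /nq; lia.
  + by [].
Qed.
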